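(* For every integer $n\ge1$, $$\sum_{k=1}^n\frac{\binom{2n}{k}\left(\frac{1}{k+1}-10\right)}{4^k}=-\frac{2n+1}{n+1}\cdot\frac{\binom{2n}{n}}{4^n}+\frac{(18n+5)2^{4n}-(16n+4)5^{2n}}{(2n+1)2^{4n}}-\frac{3(4n+1)}{2(2n+1)}\cdot\frac{5^{2n}}{2^{4n}}\sum_{k=1}^n\binom{2k}{k}\left(\frac{4}{25}\right)^k.$$ *)

(* Defs.v *)
From mathcomp Require Export all_boot all_order all_algebra.

(* Main.v *)
Require Import Defs.
From mathcomp Require Import ring zify.
From Stdlib Require Import Lia.
From mathcomp Require Import lra.
Import GRing.Theory Num.Theory.
Local Open Scope ring_scope.

Definition P (m N : nat) : rat := \sum_(k < N) 'C(m,k)%:R / 4^+k.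

Lemma four_neq0 (i : nat) : (4 : rat) ^+ i != 0.
Proof. by rewrite expf_neq0. Qed.

Lemma P_pascal m N : P m.+1 N.+1 = P m N.+1 + P m N / 4.
Proof.
rewrite /P big_ord_recl [in RHS]big_ord_recl /= -addrA; congr (_ + _).
  by rewrite !bin0.
rewrite mulr_suml -big_split; apply: eq_bigr => i _ /=.
rewrite /bump leq0n add1n binS natrD exprS; have h := four_neq0 i; field.
by rewrite h.
Qed.

Lemma P_last m N : P m N.+1 = P m N + 'C(m,N)%:R / 4^+N.
Proof. by rewrite /P big_ord_recr. Qed.

Definition Tn n := P (2*n) n.+1.
Definition Wn n := P (2*n).+1 n.+2.
Definition Sn n : rat := \sum_(1 <= k < n.+1) 'C(2*k,k)%:R * (4/25)^+k.

Lemma W_T n : Wn n = Tn n + Tn n / 4 + 'C(2*n, n.+1)%:R / 4^+n.+1.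
Proof. rewrite /Wn P_pascal P_last /Tn; ring. Qed.

Lemma T_S n : Tn n.+1 = Wn n + (Wn n - 'C((2*n).+1, n.+1)%:R / 4^+n.+1)/4.
Proof.
rewrite /Tn /Wn.
have -> : (2 * n.+1 = (2*n).+2)%N by rewrite mulnS.
rewrite P_pascal [P _.+1 n.+2]P_last; ring.
Qed.

Lemma bin1 n : (n.+1 * 'C(2*n, n.+1) = n * 'C(2*n,n))%N.
Proof. by rewrite mul_bin_left; congr (_ * _)%N; lia. Qed.

Lemma bin2 n : (n.+1 * 'C((2*n).+1, n.+1) = (2*n).+1 * 'C(2*n,n))%N.
Proof. by rewrite -mul_bin_diag. Qed.

Lemma bin3 n : (n.+1 * 'C(2*n.+1, n.+1) = 2*(2*n).+1 * 'C(2*n,n))%N.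
Proof.
have -> : (2 * n.+1 = (2*n).+2)%N by rewrite mulnS.
rewrite binS.
have -> : 'C((2*n).+1, n) = 'C((2*n).+1, n.+1).
  by rewrite -[in RHS](@bin_sub (2*n).+1 n.+1); [congr 'C(_,_); lia | lia].
by rewrite mulnDr bin2; lia.
Qed.

Lemma natq_neq0 (m : nat) : (m.+1%:R : rat) != 0.
Proof. by rewrite pnatr_eq0. Qed.

Lemma binq (a b c d : nat) : (a.+1 * b = c * d)%N -> (b%:R : rat) = c%:R * d%:R / a.+1%:R.
Proof.
move=> h; apply: (mulfI (natq_neq0 a)).
rewrite -[X in X = _]natrM h natrM; have := natq_neq0 a; move=> hh; field.
by rewrite nat1r.
Qed.

Lemma pw k : (4/25 : rat)^+k = ((25/16)^+k * 4^+k)^-1.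
Proof. by rewrite -exprMn -exprVn; congr (_ ^+ _); field. Qed.

Lemma T_closed n : Tn n = 4/5*(25/16)^+n + 3/10*(25/16)^+n * Sn n + 1/5 * ('C(2*n,n)%:R / 4^+n).
Proof.
elim: n => [|n IH].
  by rewrite /Tn /Sn /P big_ord1 big_geq.
rewrite T_S W_T /Sn big_nat_recr //= -/(Sn n) IH.
rewrite (@binq _ _ _ _ (bin1 n)) (@binq _ _ _ _ (bin2 n)) (@binq _ _ _ _ (bin3 n)) pw !exprS.
have hR : ((25/16 : rat)^+n) != 0 by rewrite expf_neq0.
have hQ := four_neq0 n.
have hn := natq_neq0 n.
set R := (25/16 : rat)^+n. set Q := (4 : rat)^+n.
set c := ('C(2*n,n)%:R : rat).
field.
by rewrite hQ nat1r hn hR.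
Qed.

Lemma pos1 (n : nat) : (1 + 2 * n%:R : rat) != 0.
Proof. apply: lt0r_neq0; have := ler0n rat n; lra. Qed.
Lemma pos2 (n : nat) : (2 * n%:R + 1 : rat) != 0.
Proof. apply: lt0r_neq0; have := ler0n rat n; lra. Qed.
Lemma pos3 (n : nat) : (n%:R + 1 : rat) != 0.
Proof. apply: lt0r_neq0; have := ler0n rat n; lra. Qed.
Lemma pos4 (n : nat) : (1 + n%:R : rat) != 0.
Proof. apply: lt0r_neq0; have := ler0n rat n; lra. Qed.

Lemma p16 n : (2 : rat) ^+ (4 * n) = 4^+n * 4^+n.
Proof. by rewrite exprM -exprMn. Qed.

Lemma p25 n : (5 : rat) ^+ (2 * n) = (25/16)^+n * 4^+n * 4^+n.
Proof. rewrite exprM -!exprMn; congr (_ ^+ _); field. Qed.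

Theorem mainTheorem14 (n : nat) (hn : (1 <= n)%N) :
  \sum_(1 <= k < n.+1) ('C(2 * n, k)%:R * (1 / (k.+1)%:R - 10) / 4 ^+ k : rat)
  = - ((2 * n + 1)%:R / (n + 1)%:R) * ('C(2 * n, n)%:R / 4 ^+ n)
    + ((18 * n + 5)%:R * 2 ^+ (4 * n) - (16 * n + 4)%:R * 5 ^+ (2 * n))
        / ((2 * n + 1)%:R * 2 ^+ (4 * n))
    - (3 * (4 * n + 1))%:R / (2 * (2 * n + 1))%:R
        * (5 ^+ (2 * n) / 2 ^+ (4 * n))
        * \sum_(1 <= k < n.+1) ('C(2 * k, k)%:R * (4 / 25) ^+ k).
Proof.
set F := fun k : nat => ('C(2 * n, k)%:R * (1 / (k.+1)%:R - 10) / 4 ^+ k : rat).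
have e0 : \sum_(0 <= k < n.+1) F k = F 0%N + \sum_(1 <= k < n.+1) F k
  by rewrite big_ltn.
have eF : \sum_(1 <= k < n.+1) F k = \sum_(k < n.+1) F k + 9.
  by rewrite -(big_mkord xpredT F) e0 /F bin0 expr0; field.
rewrite eF.
have eW : Wn n = 1 + \sum_(k < n.+1) 'C((2*n).+1, k.+1)%:R / 4^+k.+1.
  by rewrite /Wn /P big_ord_recl /= bin0 expr0 divr1.
have eF2 : \sum_(k < n.+1) F k =
   4 / (2*n).+1%:R * \sum_(k < n.+1) 'C((2*n).+1, k.+1)%:R / 4^+k.+1
   - 10 * Tn n.
  rewrite /Tn /P !mulr_sumr -sumrB; apply: eq_bigr => k _.
  rewrite /F (@binq _ _ _ _ (esym (mul_bin_diag (2*n).+1 k))) exprS.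
  have hk := natq_neq0 k. have h4 := four_neq0 k. have h2 := natq_neq0 (2*n).
  field. by rewrite h4 pos4 pos1.
rewrite eF2.
have -> : \sum_(k < n.+1) 'C((2*n).+1, k.+1)%:R / 4^+k.+1 = Wn n - 1
  by rewrite eW; ring.
rewrite W_T T_closed -/(Sn n) (@binq _ _ _ _ (bin1 n)) p16 p25 exprS.
have hR : ((25/16 : rat)^+n) != 0 by rewrite expf_neq0.
have hQ := four_neq0 n.
have hn1 := natq_neq0 n.
have h2 := natq_neq0 (2*n).
set R := (25/16 : rat)^+n. set Q := (4 : rat)^+n.
set c := ('C(2*n,n)%:R : rat).
field.
by rewrite hQ pos2 pos3.
Qed.
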